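(* Assume $\mu p<1$ and $q\neq \mu p$, and consider the model on the infinite Galton–Watson tree with the information starting at the vertex $x$ at distance $r\ge 0$ from the root. Then $$ P_r (\operatorname{diam} (\mathscr{C}) \geq 2n) \leq \frac{1 - (q / \mu p)^{r + 1}}{1 - (q / \mu p)} \, (\mu p)^n \quad \text{for all integers } n > r. $$
   Context: Let $(p_k)_{k\ge 0}$ be an offspring distribution with $p_0=0$ and finite mean $\mu=\sum_k kp_k$. Let $\mathbb{T}$ be a Galton–Watson tree with root $0$ and offspring distribution $(p_k)$. Fix $p,q\in(0,1)$. Each edge of the tree is replaced by two arrows: the arrow parent $\to$ offspring is open with probability $p$ and the arrow offspring $\to$ parent is open with probability $q$, all arrows independently of each other and of the tree. The source of the information is a vertex $x$ at distance $r$ from the root chosen independently of the offspring numbers of its ancestors and of the percolation (e.g. the vertex obtained from the root by always moving to the first offspring). The cluster is $\mathscr{C}=\{y: \text{there is a directed open path from } x \text{ to } y\}$ (including $x$). Its diameter is $\operatorname{diam}(\mathscr{C})=\max\{d(y,z): y,z\in\mathscr{C}\}$, where $d$ is the graph distance in the tree. $P_r$ denotes probability over both the tree and the percolation when the source is at distance $r$ from the root. *)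

(* Defs.v *)
From HB Require Import structures.
From mathcomp Require Import all_boot all_order all_algebra.
From mathcomp Require Import all_classical all_reals all_analysis.
From Stdlib Require Import Relations.
Set Implicit Arguments. Unset Strict Implicit. Unset Printing Implicit Defensive.
Import Order.TTheory GRing.Theory Num.Theory.

(* Vertices of the Ulam-Harris universe: words [:: i1; ...; ik], the root is
   [::], the children of u are (rcons u i), i = 0, 1, 2, ...                *)

(* Labels of the basic random variables:
   (tag 0, w) : number of offspring of vertex w;
   (tag 1, w) : state (1 = open) of the arrow parent(w) -> w;
   (tag 2, w) : state (1 = open) of the arrow w -> parent(w).               *)
Definition gw_label := ('I_3 * seq nat)%type.
Definition Off (w : seq nat) : gw_label := (@Ordinal 3 0 isT, w).
Definition Dn  (w : seq nat) : gw_label := (@Ordinal 3 1 isT, w).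
Definition Up  (w : seq nat) : gw_label := (@Ordinal 3 2 isT, w).

Definition gw_open_arrow (N : seq nat -> nat) (D U : seq nat -> bool)
    (u v : seq nat) : Prop :=
  (exists i, v = rcons u i /\ (i < N u)%N /\ D v) \/
  (exists i, u = rcons v i /\ (i < N v)%N /\ U u).

Definition gw_cluster (N : seq nat -> nat) (D U : seq nat -> bool)
    (x : seq nat) : set (seq nat) :=
  fun y => clos_refl_trans (seq nat) (gw_open_arrow N D U) x y.

Fixpoint gw_lcp (y z : seq nat) : nat :=
  match y, z with
  | a :: y', b :: z' => if a == b then (gw_lcp y' z').+1 else 0%N
  | _, _ => 0%N
  end.

Definition gw_dist (y z : seq nat) : nat := (size y + size z - 2 * gw_lcp y z)%N.

(* diam(C) >= m, with diam(C) = max {d(y,z) : y, z in C} (possibly infinite) *)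
Definition diam_ge (C : set (seq nat)) (m : nat) : Prop :=
  exists y z, C y /\ C z /\ (m <= gw_dist y z)%N.

Arguments diam_ge : clear scopes.

(* the gw_source: distance r from the root, reached by always moving to the
   first offspring *)
Definition gw_source (r : nat) : seq nat := nseq r 0%N.

Local Open Scope classical_set_scope.
Local Open Scope ereal_scope.
Definition mutually_independent {d} {T : measurableType d} {R : realType}
    (P : probability T R) (I : eqType) (X : I -> T -> nat) : Prop :=
  forall (J : seq I) (A : I -> set nat), uniq J ->
    P (\bigcap_(i in [set i | i \in J]) (X i @^-1` A i)) =
    \prod_(i <- J) P (X i @^-1` A i).

(* Main.v *)
Require Import Defs.
From HB Require Import structures.
From mathcomp Require Import all_boot all_order all_algebra.
From mathcomp Require Import all_classical all_reals all_analysis.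
From mathcomp Require Import zify ring.
From Stdlib Require Import Relations.
Import Order.TTheory GRing.Theory Num.Theory numFieldNormedType.Exports.
Set Implicit Arguments. Unset Strict Implicit. Unset Printing Implicit Defensive.

Lemma nseqSr n (x : nat) : rcons (nseq n x) x = nseq n.+1 x.
Proof. by rewrite -cats1 -[n.+1]addn1 nseqD. Qed.

Section Comb.
Variables (N : seq nat -> nat) (D U : seq nat -> bool).

Fixpoint dvalid (v s : seq nat) : Prop :=
  match s with
  | [::] => True
  | i :: s' => (i < N v)%N /\ D (rcons v i) /\ dvalid (rcons v i) s'
  end.

Lemma dvalid_cat v s1 s2 :
  dvalid v (s1 ++ s2) <-> dvalid v s1 /\ dvalid (v ++ s1) s2.
Proof.
elim: s1 v => [|i s1 IH] v /=; first by rewrite cats0; tauto.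
rewrite IH -cat_rcons; tauto.
Qed.

Definition Qv r y := exists k s, (k <= r)%N /\ y = nseq (r - k) 0%N ++ s /\
  (forall i, (i < k)%N -> U (nseq (r - i) 0%N)) /\ dvalid (nseq (r - k) 0%N) s.

Lemma reach_Q r y :
  clos_refl_trans _ (gw_open_arrow N D U) (gw_source r) y -> Qv r y.
Proof.
move/clos_rt_rtn1_iff; elim=> [|y0 z Hyz _ IH]; last case: IH Hyz => [k [s [kr [-> [HU Hd]]]]] Hyz.
  exists 0%N, [::]; rewrite subn0 cats0; split=> //; split=> //; split=> //.
case: Hyz => [[i [-> [iN Dz]]]|[i [Hy [iN Uy]]]].
  exists k, (rcons s i); split=> //; split; first by rewrite rcons_cat.
  split=> //; rewrite -cats1; apply/dvalid_cat; split=> //=.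
case/lastP: s Hy Hd Uy => [|s j].
  rewrite cats0; case E: (r - k)%N => [|m] //.
    by move=> Hy; have := size_rcons z i; rewrite -Hy.
  move=> Hy _ Uy; rewrite -nseqSr in Hy; have [Hz _] := rcons_inj Hy.
  exists k.+1, [::]; rewrite cats0; split; first by lia.
  split; first by rewrite -Hz; congr nseq; lia.
  split=> // i'; rewrite ltnS leq_eqVlt => /orP[/eqP ->|]; last exact: HU.
  by rewrite E.
move=> Hy Hd _; rewrite -rcons_cat in Hy; have [Hz _] := rcons_inj Hy.
exists k, s; split=> //; split=> //; split=> //.
by move: Hd; rewrite -cats1 => /dvalid_cat [].
Qed.

Lemma lcp_nseq a b u v : (minn a b <= gw_lcp (nseq a 0%N ++ u) (nseq b 0%N ++ v))%N.
Proof.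
elim: a b => [|a IH] [|b] //=; by rewrite minnSS ltnS.
Qed.

Lemma diam_incl r n : (r < n)%N ->
  diam_ge (gw_cluster N D U (gw_source r)) (2 * n) ->
  exists k, (k <= r)%N /\ (forall i, (i < k)%N -> U (nseq (r - i) 0%N)) /\
    exists s, size s = (n - k)%N /\ dvalid (nseq (r - k) 0%N) s.
Proof.
move=> rn [y [z [/reach_Q Hy [/reach_Q Hz Hd]]]].
case: Hy => [k1 [s1 [k1r [Ey [HU1 Hd1]]]]].
case: Hz => [k2 [s2 [k2r [Ez [HU2 Hd2]]]]].
have Hl := lcp_nseq (r - k1) (r - k2) s1 s2.
move: Hd; rewrite /gw_dist Ey Ez !size_cat !size_nseq => Hd.
have [H1|H2] : (n <= k1 + size s1)%N \/ (n <= k2 + size s2)%N by lia.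
- exists k1; split=> //; split=> //; exists (take (n - k1) s1).
  rewrite size_take; split; first by case: ltnP; lia.
  by move: Hd1; rewrite -{1}(cat_take_drop (n - k1) s1) => /dvalid_cat [].
- exists k2; split=> //; split=> //; exists (take (n - k2) s2).
  rewrite size_take; split; first by case: ltnP; lia.
  by move: Hd2; rewrite -{1}(cat_take_drop (n - k2) s2) => /dvalid_cat [].
Qed.
End Comb.

Section RT.
Variables (A : Type) (R0 : relation A).
Fixpoint opath (x : A) (l : seq A) : Prop :=
  match l with [::] => True | v :: l' => R0 x v /\ opath v l' end.
Lemma rt_path x y : clos_refl_trans A R0 x y <-> exists l, opath x l /\ last x l = y.
Proof.
split.
  move/clos_rt_rt1n_iff; elim=> [z|x0 y0 z Hxy _ [l [Hl El]]]; first by exists [::].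
  by exists (y0 :: l).
case=> l; elim: l x => [|v l IH] x /= [Hp El]; first by rewrite -El; apply: rt_refl.
by apply: rt_trans (IH v (conj (proj2 Hp) El)); apply: rt_step; case: Hp.
Qed.
End RT.

Local Open Scope classical_set_scope.
Local Open Scope ring_scope.

Section Meas.
Context {R : realType} {d : measure_display} {T : measurableType d}.
Variable (X : gw_label -> T -> nat).
Hypothesis HX : forall l (A : set nat), measurable (X l @^-1` A).

Definition Nt t w := X (Off w) t.
Definition Dt t w := X (Dn w) t == 1%N.
Definition Ut t w := X (Up w) t == 1%N.

Definition arrowE (u v : seq nat) : set T :=
  (if v == rcons u (last 0%N v) then
     X (Off u) @^-1` [set j | (last 0%N v < j)%N] `&` X (Dn v) @^-1` [set 1%N]
   else set0)
  `|` (if u == rcons v (last 0%N u) then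
     X (Off v) @^-1` [set j | (last 0%N u < j)%N] `&` X (Up u) @^-1` [set 1%N]
   else set0).

Lemma arrowE_meas u v : measurable (arrowE u v).
Proof.
by apply: measurableU; case: ifP => _; rewrite ?measurable0 //; apply: measurableI.
Qed.

Lemma arrowE_iff t u v : arrowE u v t <-> gw_open_arrow (Nt t) (Dt t) (Ut t) u v.
Proof.
rewrite /arrowE /gw_open_arrow /Nt /Dt /Ut; split.
  case=> [|]; case: ifP => // /eqP E [H1 H2].
    by left; exists (last 0%N v); split=> //; split=> //; apply/eqP.
  by right; exists (last 0%N u); split=> //; split=> //; apply/eqP.
case=> [[i [E [iN Dv]]]|[i [E [iN Uu]]]].
  left; subst v; rewrite last_rcons eqxx; split=> //=; exact/eqP.
right; subst u; rewrite last_rcons eqxx; split=> //=; exact/eqP.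
Qed.

Fixpoint pathE (x : seq nat) (l : seq (seq nat)) : set T :=
  match l with [::] => setT | v :: l' => arrowE x v `&` pathE v l' end.

Lemma pathE_meas x l : measurable (pathE x l).
Proof. by elim: l x => [|v l IH] x /=; [exact: measurableT | apply: measurableI; [exact: arrowE_meas|]]. Qed.

Lemma pathE_iff t x l : pathE x l t <-> opath (gw_open_arrow (Nt t) (Dt t) (Ut t)) x l.
Proof.
elim: l x => [|v l IH] x //=; split.
  by case=> /arrowE_iff H /IH.
by case=> /arrowE_iff H /IH.
Qed.

Definition reachE x y : set T :=
  \bigcup_(l in [set: seq (seq nat)]) (if last x l == y then pathE x l else set0).

Lemma reachE_meas x y : measurable (reachE x y).
Proof.
apply: countable_bigcupT_measurable; first exact: countableP.
by move=> l; case: ifP => _; [exact: pathE_meas | exact: measurable0].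
Qed.

Lemma reachE_iff t x y :
  reachE x y t <-> gw_cluster (Nt t) (Dt t) (Ut t) x y.
Proof.
rewrite /gw_cluster rt_path; split.
  case=> l _; case: ifP => // /eqP E /pathE_iff H; by exists l.
case=> l [/pathE_iff H E]; exists l => //; by rewrite E eqxx.
Qed.

Definition diamE x m : set T :=
  \bigcup_(y in [set: seq nat]) \bigcup_(z in [set: seq nat])
    (if (m <= gw_dist y z)%N then reachE x y `&` reachE x z else set0).

Lemma diamE_meas x m : measurable (diamE x m).
Proof.
apply: countable_bigcupT_measurable; first exact: countableP => y.
move=> y; apply: countable_bigcupT_measurable; first exact: countableP.
move=> z; case: ifP => _; last exact: measurable0.
by apply: measurableI; exact: reachE_meas.
Qed.

Lemma diamE_eq x m :
  [set t | diam_ge (gw_cluster (Nt t) (Dt t) (Ut t) x) m] = diamE x m.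
Proof.
apply/seteqP; split=> t /=.
  case=> y [z [Hy [Hz Hm]]]; exists y => //; exists z => //.
  by rewrite Hm; split; apply/reachE_iff.
case=> y _ [z _]; case: ifP => // Hm [/reachE_iff Hy /reachE_iff Hz].
by exists y, z.
Qed.

End Meas.

Lemma esum_EFin (R : realType) (f : nat -> R) l : series f @ \oo --> l ->
  (\sum_(k <oo) (f k)%:E = l%:E)%E.
Proof.
move=> H; apply: cvg_lim => //.
apply: cvg_EFin; first by near=> n; rewrite sumEFin.
apply: (cvg_trans _ H); apply: near_eq_cvg; near=> n.
by rewrite /= sumEFin /= /series /=.
Unshelve. all: by end_near.
Qed.

Lemma bigsetU_ex (T : Type) (F : nat -> set T) n t :
  (\big[setU/set0]_(i < n) F i) t -> exists2 i, (i < n)%N & F i t.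
Proof.
elim: n => [|n IH]; first by rewrite big_ord0.
rewrite big_ord_recr /= => -[/IH [i ilt Fi]|Fn].
  by exists i => //; apply: ltnW.
by exists n.
Qed.

Section Bound.
Context {R : realType} {d : measure_display} {T : measurableType d}.
Variables (P : probability T R) (X : gw_label -> T -> nat).
Variables (pk : nat -> R) (mu p : R).
Hypothesis HX : forall l (A : set nat), measurable (X l @^-1` A).
Hypothesis Hind : mutually_independent P X.
Hypothesis Hoff : forall w k, P (X (Off w) @^-1` [set k]) = (pk k)%:E.
Hypothesis Hdn : forall w, P (X (Dn w) @^-1` [set 1%N]) = p%:E.
Hypothesis Hmu : [series k%:R * pk k]_k @ \oo --> mu.

Definition cyl (J : seq gw_label) (B : gw_label -> set nat) : set T :=
  \bigcap_(i in [set i | i \in J]) X i @^-1` B i.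

Lemma cyl_nil B : cyl [::] B = setT.
Proof. by apply/seteqP; split=> t //= _ i. Qed.

Lemma cyl_cons a J B : cyl (a :: J) B = X a @^-1` B a `&` cyl J B.
Proof.
apply/seteqP; split=> t /=.
  move=> H; split; first by apply: H; rewrite /= mem_head.
  by move=> i /= iJ; apply: H; rewrite /= in_cons iJ orbT.
case=> Ha HJ i /=; rewrite in_cons => /orP[/eqP -> //|iJ]; exact: HJ.
Qed.

Lemma cyl_meas J B : measurable (cyl J B).
Proof.
elim: J => [|a J IH]; first by rewrite cyl_nil; exact: measurableT.
by rewrite cyl_cons; apply: measurableI.
Qed.

Lemma cyl_ext J B B' : (forall l, l \in J -> B l = B' l) -> cyl J B = cyl J B'.
Proof.
move=> H; apply/seteqP; split=> t /= Ht i /= iJ.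
  by rewrite -H //; apply: Ht.
by rewrite H //; apply: Ht.
Qed.

Lemma P_cyl J B : uniq J -> P (cyl J B) = (\prod_(l <- J) P (X l @^-1` B l))%E.
Proof. exact: Hind. Qed.

Lemma P_fin (A : set T) : measurable A -> P A = (fine (P A))%:E.
Proof.
move=> mA; rewrite fineK // ge0_fin_numE ?measure_ge0 //.
by apply: (le_lt_trans (probability_le1 P mA)); rewrite ltry.
Qed.

Fixpoint G (v : seq nat) (m : nat) : set T :=
  match m with
  | 0%N => setT
  | m'.+1 => \bigcup_(k in [set: nat]) (X (Off v) @^-1` [set k] `&`
       \big[setU/set0]_(i < k) (X (Dn (rcons v i)) @^-1` [set 1%N] `&` G (rcons v i) m'))
  end.

Lemma G_meas m v : measurable (G v m).
Proof.
elim: m v => [|m IH] v /=; first exact: measurableT.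
apply: bigcupT_measurable => k; apply: measurableI => //.
by apply: bigsetU_measurable => i _; apply: measurableI.
Qed.

Lemma dvalid_G t v s : dvalid (Nt X t) (Dt X t) v s -> G v (size s) t.
Proof.
elim: s v => [|i s IH] v //= [iN [Dv Hs]].
exists (Nt X t v) => //; split=> //.
apply: (bigsetU_sup (F := fun j : nat => X (Dn (rcons v j)) @^-1` [set 1%N] `&` G (rcons v j) (size s)) iN); split; first exact/eqP.
exact: IH.
Qed.

Definition desc (v : seq nat) (l : gw_label) : bool :=
  prefix v l.2 && ((val l.1 == 0%N) || ((val l.1 == 1%N) && (size v < size l.2)%N)).

Lemma Gbound m : forall v J B, uniq J -> (forall l, l \in J -> ~~ desc v l) ->
  (P (cyl J B `&` G v m) <= P (cyl J B) * ((mu * p) ^+ m)%:E)%E.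
Proof.
elim: m => [|m IH] v J B uJ HJ.
  by rewrite /= setIT expr0 mule1.
set C := cyl J B.
have mC : measurable C := cyl_meas J B.
have PC := P_fin mC; set c := fine (P C) in PC.
pose S := fun i : nat => X (Dn (rcons v i)) @^-1` [set 1%N] `&` G (rcons v i) m.
have mS : forall i, measurable (S i) by move=> i; apply: measurableI => //; exact: G_meas.
pose F := fun k : nat => C `&` (X (Off v) @^-1` [set k] `&` \big[setU/set0]_(i < k) S i).
have S1 : (P (C `&` G v m.+1) <= \sum_(k <oo) P (F k))%E.
  apply: measure_sigma_subadditive.
  - move=> k; apply: measurableI => //; apply: measurableI => //.
    by apply: bigsetU_measurable => i _.
  - by apply: measurableI => //; exact: G_meas.
  - by move=> t [Ct [k _ Hk]]; exists k.
have S2 : forall k, (P (F k) <= ((k%:R * pk k) * (p * c * (mu * p) ^+ m))%:E)%E.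
  move=> k.
  pose H := fun i : nat => C `&` X (Off v) @^-1` [set k] `&` S i.
  have Hi : forall i, (P (H i) <= (p * (pk k * c) * (mu * p) ^+ m)%:E)%E.
    move=> i.
    set w := rcons v i.
    pose J' := Dn w :: Off v :: J.
    pose B' := fun l => if l == Dn w then [set 1%N] else if l == Off v then [set k] else B l.
    have dvJ : Dn w \notin J.
      by apply/negP => /HJ; rewrite /desc /= prefix_rcons /= size_rcons ltnSn.
    have ovJ : Off v \notin J.
      by apply/negP => /HJ; rewrite /desc /= prefix_refl.
    have neq : (Dn w == Off v) = false by [].
    have neq' : (Off v == Dn w) = false by [].
    have BJ : forall l, l \in J -> B' l = B l.
      move=> l lJ; rewrite /B'; case: eqP => [El|_].
        by move: dvJ; rewrite -El lJ.
      by case: eqP => [El|_] //; move: ovJ; rewrite -El lJ.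
    have B'1 : B' (Dn w) = [set 1%N] by rewrite /B' eqxx.
    have B'2 : B' (Off v) = [set k] by rewrite /B' neq' eqxx.
    have E : H i = cyl J' B' `&` G w m.
      rewrite /J' !cyl_cons (cyl_ext BJ) B'1 B'2.
      by rewrite /H /S; apply/seteqP; split=> t /=; tauto.
    have uJ' : uniq J'.
      by rewrite /J' /= in_cons negb_or neq dvJ ovJ uJ.
    have HJ' : forall l, l \in J' -> ~~ desc w l.
      move=> l; rewrite !in_cons => /orP[/eqP->|/orP[/eqP->|lJ]].
      - by rewrite /desc /= ltnn andbF.
      - apply/negP => /andP[Hp _]; case/prefixP: Hp => s Es.
        by have := congr1 size Es; rewrite /= size_cat size_rcons; lia.
      - apply/negP => /andP[Hp Hc].
        have Hd : desc v l.
          rewrite /desc (prefix_trans (prefix_rcons v i) Hp) /=.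
          case/orP: Hc => [->//|/andP[-> Hs]]; rewrite /=; apply/orP; right.
          by move: Hs; rewrite size_rcons; lia.
        by move: (HJ l lJ); rewrite Hd.
    rewrite E; apply: (le_trans (IH w J' B' uJ' HJ')).
    rewrite P_cyl // !big_cons B'1 B'2 Hdn Hoff.
    rewrite (eq_big_seq (fun l => P (X l @^-1` B l))); last by move=> l lJ; rewrite BJ.
    rewrite -P_cyl // PC -!EFinM lee_fin.
    by rewrite le_eqVlt; apply/orP; left; apply/eqP; ring.
  apply: (le_trans (@content_subadditive _ _ _ P (F k) H k _ _ _)).
  - by move=> i _; apply: measurableI => //; apply: measurableI.
  - apply: measurableI => //; apply: measurableI => //.
    by apply: bigsetU_measurable => i _.
  - move=> t [Ct [Ok HU]]; have [i ik Si] := bigsetU_ex (F := S) HU.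
    by apply: (bigsetU_sup (F := H) ik).
  apply: le_trans; first by apply: lee_sum => i _; exact: Hi.
  rewrite sumEFin sumr_const card_ord lee_fin le_eqVlt; apply/orP; left; apply/eqP; ring.
apply: (le_trans S1).
apply: le_trans.
  by apply: lee_nneseries => [i _ _|k _]; [exact: measure_ge0 | exact: S2].
set cc := p * c * (mu * p) ^+ m.
rewrite (@esum_EFin _ _ (mu * cc)).
  by rewrite PC -EFinM lee_fin le_eqVlt; apply/orP; left; apply/eqP; rewrite /cc exprS; ring.
have -> : series (fun k => k%:R * pk k * cc) =
    (fun n => series (fun k => k%:R * pk k) n * cc).
  by apply/funext => n; rewrite /series /= big_distrl.
exact: cvgMl Hmu.
Qed.
End Bound.

Lemma geom_alg (R : fieldType) (q x : R) r n : q != x -> (r < n)%N ->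
  \sum_(k < r.+1) q ^+ k * x ^+ (n - k) =
  (1 - (q / x) ^+ r.+1) / (1 - q / x) * x ^+ n.
Proof.
move=> qx rn.
have [->|x0] := eqVneq x 0.
  rewrite expr0n (_ : (n == 0%N) = false) ?mulr0; last by apply/negbTE; rewrite -lt0n; lia.
  rewrite big1 // => k _; rewrite expr0n (_ : (n - k == 0)%N = false) ?mulr0 //.
  by apply/negbTE; have := ltn_ord k; lia.
set t := q / x.
have t1 : 1 - t != 0.
  rewrite subr_eq0 eq_sym; apply: contra qx => /eqP H.
  by rewrite -(divfK x0 q) -/t H mul1r.
have -> : \sum_(k < r.+1) q ^+ k * x ^+ (n - k) = (\sum_(k < r.+1) t ^+ k) * x ^+ n.
  rewrite big_distrl; apply: eq_bigr => k _ /=.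
  have kn : (k <= n)%N by have := ltn_ord k; lia.
  rewrite /t exprMn exprVn (_ : x ^+ n = x ^+ (n - k) * x ^+ k); last by rewrite -exprD subnK.
  have xk : x ^+ k != 0 by apply: expf_neq0.
  by field.
have -> : 1 - t ^+ r.+1 = (1 - t) * \sum_(k < r.+1) t ^+ k.
  by rewrite -opprB subrX1 -mulNr opprB.
by rewrite [(1 - t) * _]mulrC mulfK.
Qed.


Theorem theorem3 (R : realType) (d : measure_display) (T : measurableType d)
  (P : probability T R) (X : gw_label -> T -> nat)
  (pk : nat -> R) (mu p q : R) (r n : nat) :
  (* offspring distribution: p_0 = 0, finite mean mu *)
  (forall k, 0 <= pk k) ->
  pk 0%N = 0 ->
  series pk @ \oo --> (1 : R) ->
  [series k%:R * pk k]_k @ \oo --> mu ->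
  0 < p < 1 -> 0 < q < 1 ->
  (* the basic random variables *)
  (forall l (A : set nat), measurable (X l @^-1` A)) ->
  mutually_independent P X ->
  (forall w k, P (X (Off w) @^-1` [set k]) = (pk k)%:E) ->
  (forall w, P (X (Dn w) @^-1` [set 1%N]) = p%:E) ->
  (forall w, P (X (Dn w) @^-1` [set 0%N]) = (1 - p)%:E) ->
  (forall w, P (X (Up w) @^-1` [set 1%N]) = q%:E) ->
  (forall w, P (X (Up w) @^-1` [set 0%N]) = (1 - q)%:E) ->
  (* hypotheses of the theorem *)
  mu * p < 1 -> q != mu * p -> (r < n)%N ->
  (P [set t | diam_ge
        (gw_cluster (fun w : seq nat => X (Off w) t) (fun w : seq nat => X (Dn w) t == 1%N)
                 (fun w : seq nat => X (Up w) t == 1%N) (gw_source r))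
        (2 * n)%N]
  <= ((1 - (q / (mu * p)) ^+ r.+1) / (1 - q / (mu * p)) * (mu * p) ^+ n)%:E)%E.
Proof.
move=> _ _ _ Hmu _ _ HX Hind Hoff Hdn _ Hup _ _ qmp rn.
have -> := diamE_eq X (gw_source r) (2 * n).
have mA := diamE_meas HX (gw_source r) (2 * n).
pose JU k := [seq Up (nseq (r - i) 0%N) | i <- iota 0 k].
pose one := fun _ : gw_label => [set 1%N].
pose Fk := fun k : nat => cyl X (JU k) one `&` G X (nseq (r - k) 0%N) (n - k).
have mF : forall k, measurable (Fk k).
  by move=> k; apply: measurableI; [exact: cyl_meas | exact: G_meas].
apply: (le_trans (@content_subadditive _ _ _ P _ Fk r.+1 (fun k _ => mF k) mA _)).
  move=> t; rewrite -diamE_eq /= => /(diam_incl rn) [k [kr [HU [s [Hs Hd]]]]].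
  apply: (bigsetU_sup (F := Fk) (_ : (k < r.+1)%N)); first by [].
  split; last by rewrite -Hs; exact: dvalid_G.
  move=> l /= /mapP [i]; rewrite mem_iota add0n => /andP[_ ik] ->.
  by rewrite /one /=; apply/eqP; apply: HU.
have uJU : forall k, (k <= r)%N -> uniq (JU k).
  move=> k kr; rewrite map_inj_in_uniq ?iota_uniq //.
  move=> i j; rewrite !mem_iota !add0n => /andP[_ ik] /andP[_ jk] [] /(congr1 size).
  by rewrite !size_nseq; lia.
have PJU : forall k, (k <= r)%N -> P (cyl X (JU k) one) = (q ^+ k)%:E.
  move=> k kr; rewrite P_cyl //; last exact: uJU.
  rewrite big_map (eq_bigr (fun _ => q%:E)); last by move=> i _; exact: Hup.
  by rewrite prodEFin -[in iota 0 k](subn0 k) prodr_const_nat subn0.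
apply: le_trans.
  apply: lee_sum => k _.
  apply: (le_trans (Gbound HX Hind Hoff Hdn Hmu (n - k) one (uJU k _) _)).
  - by have := ltn_ord k; lia.
  - by move=> l /mapP [i _ ->]; rewrite /desc /= andbF.
  rewrite PJU; last by have := ltn_ord k; lia.
  rewrite -EFinM; exact: lexx.

rewrite /= sumEFin lee_fin.
by rewrite -geom_alg // lexx.
Qed.
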